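(* Let $A$ be an infinite set and $k\in\mathbb{N}$. Then the $k$-truncated powerset lattice $\mathcal{P}_k(A)$ is $\Theta(n^k)$.
   Context: The lattice $\mathcal{P}_k(A)$ consists of all subsets of $A$ of cardinality at most $k$, ordered by inclusion, together with an adjoined greatest element $\top$ (so the join of two sets is their union if it has at most $k$ elements, and $\top$ otherwise; the least element is $\emptyset$). For a lattice $\mathcal{L}$ with least upper bounds $\bigsqcup$ of finite sets ($\bigsqcup\emptyset=\bot$), the closure set of finite $S\subseteq\mathcal{L}$ is $C(S)=\{\bigsqcup S' : S'\subseteq S\}$, and $CS_{\mathcal{L}}(n)=\max\{|C(S)| : S\subseteq\mathcal{L}\text{ finite}, |S|\le n\}$. For $f,g:\mathbb{N}\to\mathbb{N}$, $f$ is $O(g)$ (resp. $\Omega(g)$) iff there exist $N_0\in\mathbb{N}$ and rational $C>0$ with $f(n)\le Cg(n)$ (resp. $\ge$) for all $n\ge N_0$; $\Theta$ means both. A lattice is $\Theta(f(n))$ iff its $CS$ is. *)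

(* Defs.v *)
From mathcomp Require Import all_boot all_algebra.
From mathcomp Require Import finmap.
From mathcomp Require Import boolp.

Set Implicit Arguments.
Unset Strict Implicit.
Unset Printing Implicit Defensive.

Local Open Scope fset_scope.

Definition infinite_type (A : eqType) : Prop :=
  forall s : seq A, exists x : A, x \notin s.

Section Pk.
Variables (A : choiceType) (k : nat).

Definition small_set := {X : {fset A} | #|` X| <= k}.

(* the lattice P_k(A): Some X for a small set X, None for the adjoined top *)
Definition Pk := option small_set.

Definition Pk_top : Pk := None.

Lemma fset0_small : #|` (fset0 : {fset A})| <= k.
Proof. by rewrite cardfs0. Qed.

Definition Pk_bot : Pk := Some (exist _ fset0 fset0_small).

(* binary join: union if it has at most k elements, top otherwise *)
Definition Pk_join (x y : Pk) : Pk :=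
  match x, y with
  | Some X, Some Y => insub (val X `|` val Y)
  | _, _ => None
  end.

Definition Pk_bigjoin (S : {fset Pk}) : Pk := \big[Pk_join/Pk_bot]_(x <- S) x.

Definition closure_set (S : {fset Pk}) : {fset Pk} :=
  [fset Pk_bigjoin S' | S' in fpowerset S].

Definition CS_pred (n : nat) : pred nat :=
  fun m => `[< exists S : {fset Pk}, #|` S| <= n /\ #|` closure_set S| = m >].

Lemma CS_pred_ex n : exists m, CS_pred n m.
Proof.
exists #|` closure_set fset0|; apply/asboolP; by exists fset0; split => //; rewrite cardfs0.
Qed.

Lemma CS_pred_bound n m : CS_pred n m -> m <= 2 ^ n.
Proof.
move/asboolP => [S [HS <-]].
apply: leq_trans (leq_imfset_card _ _ _) _.
rewrite (@perm_size _ _ (fpowerset S)); last first.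
  by apply: uniq_perm; rewrite ?enum_finmem_uniq ?fset_uniq // => x; rewrite enum_finmemE.
by rewrite card_fpowerset leq_exp2l.
Qed.

Definition CS (n : nat) : nat := ex_maxn (CS_pred_ex n) (@CS_pred_bound n).

End Pk.

Local Open Scope ring_scope.

Definition bigO (f g : nat -> nat) : Prop :=
  exists (N0 : nat) (C : rat), 0 < C /\
    forall n : nat, (N0 <= n)%N -> (f n)%:R <= C * (g n)%:R.

Definition bigOmega (f g : nat -> nat) : Prop :=
  exists (N0 : nat) (C : rat), 0 < C /\
    forall n : nat, (N0 <= n)%N -> (f n)%:R >= C * (g n)%:R.

Definition bigTheta (f g : nat -> nat) : Prop := bigO f g /\ bigOmega f g.

(* Main.v *)
Require Import Defs.
From mathcomp Require Import all_boot all_algebra.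
From mathcomp Require Import finmap.
From mathcomp Require Import zify.
From mathcomp Require Import boolp.
Set Implicit Arguments. Unset Strict Implicit. Unset Printing Implicit Defensive.
Local Open Scope fset_scope.

Section Aux.
Variables (A : choiceType) (k : nat).
Local Notation Pk := (Pk A k).

Definition oset (x : Pk) : {fset A} := if x is Some X then val X else fset0.
Definition U (s : seq Pk) : {fset A} := \bigcup_(x <- s) oset x.

Lemma U_cons x s : U (x :: s) = oset x `|` U s.
Proof. by rewrite /U big_cons. Qed.

Lemma fold_some (s : seq Pk) X :
  foldr (@Pk_join A k) (Pk_bot A k) s = Some X -> val X = U s /\ all isSome s.
Proof.
elim: s X => [|x s IH] X /=.
  by case=> <-; rewrite /U big_nil.
case: x => [X1|] //; case E: (foldr _ _ s) => [X2|] //= H.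
have [E1 E2] := IH _ E.
rewrite U_cons /= -E1; split => //.
by move: H; case: insubP => // u _ <- [<-].
Qed.

Lemma fold_ex (s : seq Pk) :
  all isSome s -> (#|` U s| <= k)%N -> exists X, foldr (@Pk_join A k) (Pk_bot A k) s = Some X.
Proof.
elim: s => [|x s IH] /=; first by eexists.
case: x => [X1|] //= Hs; rewrite U_cons /= => Hc.
have [X2 E] := IH Hs (leq_trans (fsubset_leq_card (fsubsetUr _ _)) Hc).
rewrite E /=; have [E1 _] := fold_some E.
by rewrite insubT ?E1 //; eexists.
Qed.

Fixpoint tuples (T : Type) (s : seq T) (n : nat) : seq (seq T) :=
  if n is n'.+1 then [seq x :: t | x <- s, t <- tuples s n'] else [:: [::]].

Lemma size_tuples (T : Type) (s : seq T) n : size (tuples s n) = (size s) ^ n.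
Proof. by elim: n => //= n IH; rewrite size_allpairs IH expnS. Qed.

Lemma mem_tuples (T : eqType) (s t : seq T) :
  all (mem s) t -> t \in tuples s (size t).
Proof.
elim: t => [|x t IH] /=; first by rewrite mem_seq1.
by case/andP=> Hx Ht; apply/allpairsP; exists (x, t); split => //; apply: IH.
Qed.

Lemma closure_sub (S : {fset Pk}) :
  closure_set S `<=` [fset x in None :: map (foldr (@Pk_join A k) (Pk_bot A k)) (tuples (Pk_bot A k :: S) k)].
Proof.
apply/fsubsetP => x /imfsetP [S' /=]; rewrite fpowersetE => HS' ->.
rewrite /Pk_bigjoin -foldrE.
case E: (foldr _ _ _) => [X|]; last by rewrite in_fset inE eqxx.
have [EX Hall] := fold_some E.
rewrite !inE /=; apply/mapP.
pose P := fun a (x : Pk) => a \in oset x.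
pose pick a := nth (Pk_bot A k) S' (find (P a) S').
have pickP a : a \in U S' -> pick a \in S' /\ a \in oset (pick a).
  move=> /bigfcupP [y /andP [yS _] ay].
  have Hh : has (P a) S' by apply/hasP; exists y.
  by split; [apply: mem_nth; rewrite -has_find | apply: (nth_find _ Hh)].
have Hc : (#|` U S'| <= k)%N by rewrite -EX; apply: (valP X).
pose t := map pick (U S') ++ nseq (k - #|` U S'|) (Pk_bot A k).
have tP y : y \in t -> y = Pk_bot A k \/ (y \in S').
  rewrite mem_cat => /orP [/mapP [a Ha ->]|/nseqP [-> _]]; last by left.
  by right; case: (pickP a Ha).
have Ut : U t = U S'.
  apply/fsetP => a; apply/bigfcupP/bigfcupP.
    case=> y /andP [yt _] ay; case: (tP y yt) => [Ey|yS].
      by move: ay; rewrite Ey /= inE.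
    by exists y => //; rewrite yS.
  move=> [y /andP [yS _] ay].
  have Ha : a \in U S' by apply/bigfcupP; exists y => //; rewrite yS.
  exists (pick a); last by case: (pickP a Ha).
  by rewrite mem_cat map_f.
have Hallt : all isSome t.
  apply/allP => y /tP [->|yS] //; exact: (allP Hall y yS).
have := fold_ex Hallt; rewrite Ut => /(_ Hc) [Y EY].
have [EY1 _] := fold_some EY.
have -> : X = Y by apply: val_inj; rewrite EX EY1 Ut.
exists t => //.
have Hsz : size t = k by rewrite size_cat size_map size_nseq subnKC.
have := @mem_tuples _ (Pk_bot A k :: S) t; rewrite Hsz; apply; apply/allP => y /tP [->|yS]; rewrite inE ?eqxx //.
by rewrite inE (fsubsetP HS' _ yS) orbT.
Qed.

Lemma closure_card (S : {fset Pk}) : (#|` closure_set S| <= 1 + (#|` S|.+1) ^ k)%N.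
Proof.
apply: leq_trans (fsubset_leq_card (closure_sub S)) _.
rewrite card_fseq (leq_trans (size_undup _)) //= size_map size_tuples add1n ltnS; exact: leqnn.
Qed.

Lemma size_enum_finmem (T : finType) (B : {pred T}) :
  size (enum_finmem (mem B)) = #|B|.
Proof.
have /card_uniqP <- := enum_finmem_uniq (mem B).
by apply: eq_card => x; rewrite enum_finmemE.
Qed.

Lemma oset_insub (X : {fset A}) : (#|` X| <= k)%N -> oset (insub X : Pk) = X /\ isSome (insub X : Pk).
Proof. by move=> H; rewrite insubT. Qed.

Lemma distinct_seq (HA : infinite_type A) n : exists s : seq A, uniq s /\ size s = n.
Proof.
elim: n => [|n [s [Hu Hs]]]; first by exists [::].
have [x Hx] := HA s; exists (x :: s); by rewrite /= Hx Hu Hs.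
Qed.

Lemma lower_card (HA : infinite_type A) (Hk : (0 < k)%N) n :
  exists S : {fset Pk}, (#|` S| <= n)%N /\ ('C(n, k) <= #|` closure_set S|)%N.
Proof.
have [s [Hu Hs]] := distinct_seq HA n.
have [x0 _] := HA [::].
pose e (i : 'I_n) := nth x0 s i.
have einj : injective e.
  by move=> i j /eqP; rewrite /e nth_uniq ?Hs // => /eqP /val_inj.
pose sing (a : A) : Pk := insub [fset a].
have singP a : oset (sing a) = [fset a] /\ isSome (sing a).
  by apply: oset_insub; rewrite cardfs1.
pose S := [fset x in map sing s].
exists S; split.
  by rewrite card_fseq (leq_trans (size_undup _)) // size_map Hs.
pose XB (B : {set 'I_n}) := [fset e i | i in B].
pose SB (B : {set 'I_n}) := [fset sing (e i) | i in B].
have USB B : U (SB B) = XB B.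
  apply/fsetP => a; apply/bigfcupP/imfsetP.
    case=> y /andP [/imfsetP [i Hi ->] _]; rewrite (singP _).1 inE => /eqP ->.
    by exists i.
  case=> i Hi ->; exists (sing (e i)); last by rewrite (singP _).1 inE.
  by rewrite andbT; apply/imfsetP; exists i.
have phiP (B : {set 'I_n}) : #|B| = k -> exists Y, Pk_bigjoin (SB B) = Some Y /\ val Y = XB B.
  move=> HB.
  have Hall : all isSome (SB B).
    by apply/allP => y /imfsetP [i _ ->]; case: (singP (e i)).
  have Hc : (#|` U (SB B)| <= k)%N.
    by rewrite USB /XB card_imfset // size_enum_finmem HB.
  have [Y EY] := fold_ex Hall Hc.
  exists Y; split; first by rewrite /Pk_bigjoin -foldrE.
  by have [-> _] := fold_some EY; rewrite USB.
pose D := [set B : {set 'I_n} | #|B| == k].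
pose phi B := Pk_bigjoin (SB B).
have Hsub : [fset phi B | B in D] `<=` closure_set S.
  apply/fsubsetP => x /imfsetP [B _ ->]; apply/imfsetP; exists (SB B) => //.
  rewrite fpowersetE; apply/fsubsetP => y /imfsetP [i _ ->].
  by rewrite inE map_f // /e mem_nth // Hs.
apply: leq_trans (fsubset_leq_card Hsub).
rewrite card_in_imfset ?size_enum_finmem ?card_draws ?card_ord //.
move=> B C; rewrite !inE => /eqP HB /eqP HC.
have [Y [EY VY]] := phiP B HB; have [Z [EZ VZ]] := phiP C HC.
rewrite /phi EY EZ => -[EYZ]; move: VY; rewrite EYZ VZ => EX.
apply/setP => i.
by rewrite -(mem_imfset imfset_key (mem B) einj) -(mem_imfset imfset_key (mem C) einj) -/(XB B) -/(XB C) EX.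
Qed.
End Aux.

Lemma ffact_lower n k : (2 * k <= n)%N -> (n ^ k <= 2 ^ k * n ^_ k)%N.
Proof.
elim: k => [|k IH] H; first by rewrite ffactn0.
have H1 : (n <= 2 * (n - k))%N by lia.
have H2 : (2 * k <= n)%N by lia.
have := leq_mul (IH H2) H1.
rewrite expnSr ffactnSr expnS.
have -> : (2 ^ k * n ^_ k * (2 * (n - k)) = 2 * 2 ^ k * (n ^_ k * (n - k)))%N by lia.
by [].
Qed.

Lemma expn_mono m n e : (m <= n -> m ^ e <= n ^ e)%N.
Proof. by move=> H; elim: e => // e IH; rewrite !expnS leq_mul. Qed.

Lemma CS_ge (A : choiceType) k n (S : {fset Pk A k}) :
  (#|` S| <= n)%N -> (#|` closure_set S| <= CS A k n)%N.
Proof.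
move=> HS; rewrite /CS; case: ex_maxnP => m _ Hmax; apply: Hmax.
by apply/asboolP; exists S.
Qed.

Lemma CS_le (A : choiceType) k n : (CS A k n <= 1 + n.+1 ^ k)%N.
Proof.
rewrite /CS; case: ex_maxnP => m /asboolP [S [HS <-]] _.
apply: leq_trans (closure_card S) _.
by rewrite leq_add2l expn_mono // ltnS.
Qed.

Import GRing.Theory Num.Theory.

Theorem mainTheorem7 (A : choiceType) (k : nat) (HA : infinite_type A) :
  bigTheta (CS A k) (fun n => n ^ k).
Proof.
split.
  exists 1%N, ((2 ^ k + 1)%N%:R)%R; split; first by rewrite ltr0n addn1.
  move=> n Hn; rewrite -natrM ler_nat.
  apply: leq_trans (CS_le A k n) _.
  have H1 : (n.+1 ^ k <= 2 ^ k * n ^ k)%N.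
    by rewrite -expnMn expn_mono //; lia.
  have H2 : (1 <= n ^ k)%N by rewrite expn_gt0 Hn.
  rewrite mulnDl mul1n addnC; exact: leq_add.
exists (2 * k)%N, (((2 ^ k * k`!)%N%:R)^-1)%R; split.
  by rewrite invr_gt0 ltr0n muln_gt0 expn_gt0 fact_gt0.
move=> n Hn; rewrite ler_pdivrMl ?ltr0n ?muln_gt0 ?expn_gt0 ?fact_gt0 //.
rewrite -natrM ler_nat.
apply: leq_trans (ffact_lower Hn) _.
rewrite -mulnA leq_mul2l; apply/orP; right.
rewrite -bin_ffact mulnC leq_mul2l; apply/orP; right.
case: (posnP k) => [k0|kpos].
  subst k; rewrite bin0.
  have := @CS_ge A 0 n fset0; rewrite cardfs0 => /(_ isT).
  apply: leq_trans; rewrite cardfs_gt0; apply/eqP => E.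
  have : Pk_bigjoin (fset0 : {fset Pk A 0}) \in closure_set fset0.
    by apply/imfsetP; exists fset0 => //; rewrite fpowersetE fsub0set.
  by rewrite E inE.
have [S [HS HC]] := lower_card HA kpos n.
exact: leq_trans HC (CS_ge HS).
Qed.
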